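(* For every even $n\ge2$ there exists a unique $w_n\in\mathcal F_n$ with $\tau_{\mathbf m}(w_n)=\{s_{n/2}\}$. Moreover, for $n\ge4$, $w_n=\nu_{n/2}(\rho(w_{n-2}))$.
   Context: $s_i=(i,i+1)$; permutations compose right to left. For even $m$, $\mathcal F_m$ is the set of fixed-point-free involutions of $S_m$ with conjugation action, height $\ell/2$, Bruhat order the weakest partial order with $z\le tzt$ for transpositions $t$ with $\ell(z)\le\ell(tzt)$, and $\tau_{\mathbf m}(z)=\{s_i:s_izs_i\le z\}$. Regard $\mathcal F_{n-2}\subset S_n$; $w_0$ longest element of $S_n$; $\rho(z)=w_0zs_{n-1}w_0$; $Y_1=\rho(\mathcal F_{n-2})$; $\sigma_j=s_j\cdots s_1$; $\nu_j(x)=\sigma_jx\sigma_j^{-1}$ for $x\in Y_1$. *)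

(* Defs.v *)
From mathcomp Require Import all_boot all_fingroup.
Set Implicit Arguments. Unset Strict Implicit. Unset Printing Implicit Defensive.
Local Open Scope group_scope.

(* Permutations of {1..n} are modelled by 'S_n = {perm 'I_n} (0-based:
   paper point p corresponds to ordinal p-1). *)

(* Paper composition (right to left): (pc x y) i = x (y i).
   MathComp's product is left-to-right: (x * y) i = y (x i). *)
Definition pc n (x y : 'S_n) : 'S_n := y * x.

(* simple transposition s_i = (i, i+1) (paper, 1-based); identity if out of range *)
Definition sr n (i : nat) : 'S_n :=
  match insub i.-1, insub i with
  | Some a, Some b => tperm a b
  | _, _ => 1
  end.

Definition len n (z : 'S_n) : nat :=
  #|[set p : 'I_n * 'I_n | (p.1 < p.2) && (z p.2 < z p.1)]|.

Definition fpfb n (z : 'S_n) : bool := (z * z == 1) && [forall i, z i != i].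
Definition Ffpf n : {set 'S_n} := [set z | fpfb z].

(* generating relation of the Bruhat order on F_n: z <= t z t for a
   transposition t with len z <= len (t z t) *)
Definition bstep n : rel 'S_n := fun z y =>
  [&& fpfb z,
      [exists a : 'I_n, exists b : 'I_n,
          (a != b) && (y == pc (tperm a b) (pc z (tperm a b)))]
    & len z <= len y].

Definition bruhat_le n (z y : 'S_n) : bool := connect (@bstep n) z y.

Definition simples n : {set 'S_n} := [set sr n i | i : 'I_n & 0 < i].

Definition tau n (z : 'S_n) : {set 'S_n} :=
  [set s in simples n | bruhat_le (pc s (pc z s)) z].

Definition w0 n : 'S_n := perm (@rev_ord_inj n).

(* F_k regarded inside S_(k+2): fix the last two points *)
Definition ext2 k (z : 'S_k) : 'S_(k.+2) :=
  lift_perm ord_max ord_max (lift_perm ord_max ord_max z).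

Definition rho k (z : 'S_k) : 'S_(k.+2) :=
  pc (w0 _) (pc (ext2 z) (pc (sr (k.+2) (k.+1)) (w0 _))).

Fixpoint sigma n (j : nat) : 'S_n :=
  match j with
  | 0 => 1
  | j'.+1 => pc (sr n j) (sigma n j')
  end.

Definition nu n (j : nat) (x : 'S_n) : 'S_n :=
  pc (sigma n j) (pc x (sigma n j)^-1).

(* Main.v *)
Require Import Defs.
From mathcomp Require Import all_boot all_fingroup zify.
Set Implicit Arguments. Unset Strict Implicit. Unset Printing Implicit Defensive.
Local Open Scope group_scope.

Lemma tpermV' n (a b u : 'I_n) :
  val (tperm a b u) = if u == a then val b else if u == b then val a else val u.
Proof. by case: tpermP => [->|->|/eqP/negbTE-> /eqP/negbTE->]; rewrite ?eqxx //; case: eqP => [->|]. Qed.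

Lemma eqoE n (u v : 'I_n) : (u == v) = (val u == val v).
Proof. by []. Qed.

Lemma tperm_lt n (a b u v : 'I_n) : val b = (val a).+1 -> u != v ->
  (tperm a b u < tperm a b v) =
   if (u == a) && (v == b) then false else
   if (u == b) && (v == a) then true else (u < v).
Proof.
move=> hb huv; rewrite !tpermV' !eqoE; move: huv; rewrite eqoE.
have -> : (u < v) = (val u < val v) by [].
move: (val u) (val v) (val a) (val b) hb.
move=> u0 v0 a0 b0 hb0 huv0; repeat (case: eqP => ? /=); first [ done | lia | (apply/idP/idP => ?; lia) | (apply/negbTE; lia) ].
Qed.


Lemma pcE n (x y : 'S_n) k : pc x y k = x (y k).
Proof. by rewrite /pc permM. Qed.
Definition invset n (z : 'S_n) := [set p : 'I_n * 'I_n | (p.1 < p.2) && (z p.2 < z p.1)].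
Lemma lenE n (z : 'S_n) : len z = #|invset z|. Proof. by []. Qed.

Lemma permEq n (y : 'S_n) u x : (y u == x) = (u == y^-1 x).
Proof. by apply/eqP/eqP => [<-|->]; rewrite ?permK ?permKV. Qed.

Lemma lenL n (a b : 'I_n) (y : 'S_n) : val b = (val a).+1 ->
  (y^-1 a < y^-1 b) -> len (pc (tperm a b) y) = (len y).+1.
Proof.
move=> hb hlt; rewrite !lenE.
have -> : invset (pc (tperm a b) y) = (y^-1 a, y^-1 b) |: invset y.
  apply/setP => -[p q]; rewrite !inE /= !pcE.
  have [->|hpq] := eqVneq p q.
    rewrite ltnn /= orbF; apply/esym/negbTE; apply/eqP => -[h1 h2]; move: hlt; by rewrite -h1 -h2 ltnn.
  rewrite tperm_lt //; last by rewrite (inj_eq perm_inj) eq_sym.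
  have -> : ((p,q) == (y^-1 a, y^-1 b)) = (p == y^-1 a) && (q == y^-1 b) by [].
  rewrite !permEq.
  have PQ : y^-1 a != y^-1 b.
    by rewrite (inj_eq perm_inj) eqoE hb; lia.
  case: (eqVneq p (y^-1 a)) => hp; case: (eqVneq q (y^-1 b)) => hq /=.
  - by subst; rewrite eq_sym (negbTE PQ) hlt.
  1-3: case: (boolP (q == y^-1 a)) => hqa; case: (boolP (p == y^-1 b)) => hpb //=.
  1-3: by move/eqP: hqa => ->; move/eqP: hpb => ->; rewrite ltnNge (ltnW hlt).
rewrite cardsU1 inE /= !permKV hlt /=.
have h : (b < a) = false by apply/negP; move: hb; rewrite /=; lia.
by rewrite h.
Qed.


Lemma lenR n (a b : 'I_n) (z : 'S_n) : val b = (val a).+1 ->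
  (z a < z b) -> len (pc z (tperm a b)) = (len z).+1.
Proof.
move=> hb hlt; rewrite !lenE.
pose phi := fun p : 'I_n * 'I_n => (tperm a b p.1, tperm a b p.2).
have phiI : injective phi.
  by move=> [p q] [p' q'] [/perm_inj -> /perm_inj ->].
have ab : a != b by rewrite eqoE hb; lia.
have -> : invset (pc z (tperm a b)) = (a, b) |: (phi @^-1: invset z).
  apply/setP => -[p q]; rewrite !inE /= !pcE.
  have -> : ((p,q) == (a, b)) = (p == a) && (q == b) by [].
  have [->|hpq] := eqVneq p q.
    rewrite !ltnn /= orbF; case: (eqVneq q a) => [->|] //=.
    by rewrite (negbTE ab).
  rewrite tperm_lt //.
  case: (boolP ((p == a) && (q == b))) => [/andP[/eqP-> /eqP->]|h1] /=.
    by rewrite tpermL tpermR hlt andbT; apply/esym; move: hb => /=; lia.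
  case: (boolP ((p == b) && (q == a))) => [/andP[/eqP-> /eqP->]|h2] /=.
    rewrite tpermL tpermR.
    have h : (b < a) = false by apply/negP; move: hb; rewrite /=; lia.
    by rewrite h /=; apply/esym/negbTE; rewrite -leqNgt ltnW.
  by [].
rewrite cardsU1 card_preimset // !inE /= tpermL tpermR.
have h : (b < a) = false by apply/negP; move: hb; rewrite /=; lia.
by rewrite h.
Qed.


Lemma fpf_invol n (z : 'S_n) : fpfb z -> forall k, z (z k) = k.
Proof. by case/andP => /eqP h _ k; rewrite -permM h perm1. Qed.

Lemma fpf_nofix n (z : 'S_n) : fpfb z -> forall k, z k != k.
Proof. by case/andP => _ /forallP. Qed.

Lemma fpf_conj n (z : 'S_n) (a b : 'I_n) : fpfb z -> fpfb (pc (tperm a b) (pc z (tperm a b))).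
Proof.
move=> hz; apply/andP; split.
  by apply/eqP/permP => k; rewrite permM perm1 !pcE tpermK fpf_invol // tpermK.
apply/forallP => k; rewrite !pcE; apply/eqP => h.
have : z (tperm a b k) = tperm a b k by rewrite -{2}h tpermK.
by apply/eqP; apply: fpf_nofix.
Qed.

Lemma conjK n (z : 'S_n) (a b : 'I_n) :
  pc (tperm a b) (pc (pc (tperm a b) (pc z (tperm a b))) (tperm a b)) = z.
Proof. by apply/permP => k; rewrite !pcE !tpermK. Qed.

Lemma lenS2 n (a b : 'I_n) (z : 'S_n) : fpfb z -> val b = (val a).+1 ->
  (z a < z b) -> len (pc (tperm a b) (pc z (tperm a b))) = (len z).+2.
Proof.
move=> hz hb hlt.
have yinv : forall x, (pc z (tperm a b))^-1 x = tperm a b (z x).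
  by move=> x; apply: (@perm_inj _ (pc z (tperm a b))); rewrite permKV pcE tpermK fpf_invol.
rewrite lenL // ?lenR // !yinv tperm_lt //; last by rewrite (inj_eq perm_inj); apply/eqP => h; move: hlt; rewrite h ltnn.
case: (eqVneq (z a) a) => [h|h] /=; first by move: (fpf_nofix hz a); rewrite h eqxx.
case: (eqVneq (z a) b) => [h'|h'] /=; last by [].
case: (eqVneq (z b) a) => [h''|h''] /=; last by [].
by move: hlt; rewrite h' h''; move: hb => /=; lia.
Qed.

Lemma bruhat_mono n (x y : 'S_n) : bruhat_le x y -> len x <= len y.
Proof.
case/connectP => p; elim: p x => [|c p IH] x /=; first by move=> _ ->.
case/andP => /and3P [_ _ hl] hp hy.
exact: leq_trans hl (IH _ hp hy).
Qed.

Lemma tau_char n (z : 'S_n) (a b : 'I_n) : fpfb z -> val b = (val a).+1 ->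
  bruhat_le (pc (tperm a b) (pc z (tperm a b))) z = (z b < z a).
Proof.
move=> hz hb.
case: (ltngtP (z a) (z b)) => h.
- apply/negbTE/negP => /bruhat_mono; rewrite lenS2 //; lia.
- case: (eqVneq (z a) b) => hza.
  + have hzb : z b = a by rewrite -hza fpf_invol.
    suff -> : pc (tperm a b) (pc z (tperm a b)) = z by apply: connect0.
    apply/permP => k; rewrite !pcE.
    case: (tpermP a b k) => [->|->|hka hkb]; first by rewrite hzb tpermL hza.
      by rewrite hza tpermR hzb.
    case: tpermP => // hk.
      by case: hkb; apply: (@perm_inj _ z); rewrite hk hzb.
    by case: hka; apply: (@perm_inj _ z); rewrite hk hza.
  + apply: connect1; apply/and3P; split; first exact: fpf_conj.
      by apply/existsP; exists a; apply/existsP; exists b; rewrite conjK eqxx andbT eqoE hb; lia.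
    set z' := pc _ _.
    have hz' : fpfb z' by apply: fpf_conj.
    have hlt' : z' a < z' b.
      rewrite /z' !pcE tpermL tpermR tperm_lt //; last by apply/eqP => e; move: h; rewrite e ltnn.
      case: (eqVneq (z b) a) => [h1|h1] /=.
        by move: hza; rewrite -h1 fpf_invol // eqxx.
      case: (eqVneq (z b) b) => [h2|h2] //=.
      by move: (fpf_nofix hz b); rewrite h2 eqxx.
    have := lenS2 hz' hb hlt'; rewrite /z' conjK => ->; lia.
- by have e := perm_inj (val_inj h); move: hb; rewrite e; lia.
Qed.


Lemma srE n (a b : 'I_n) : val b = (val a).+1 -> sr n b = tperm a b.
Proof.
move=> hb; have hb' : nat_of_ord b = (nat_of_ord a).+1 := hb.
by rewrite /sr {1}hb' /= valK valK.
Qed.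

Lemma tperm_adj_eq n (a b a' b' : 'I_n) : val b = (val a).+1 -> val b' = (val a').+1 ->
  (tperm a b == tperm a' b') = (b == b').
Proof.
move=> hb hb'; apply/eqP/eqP => [e|e].
  have := tpermV' a' b' a; rewrite -e tpermL !eqoE.
  move: hb hb' => /= h1 h2; case: eqP => [e1|n1]; [|case: eqP => [e2|n2]] => h3; apply: val_inj => /=; lia.
have e' : a = a' by apply: val_inj; move: hb hb'; rewrite e /=; lia.
by rewrite e e'.
Qed.

Lemma adj_of n (i : 'I_n) : 0 < i -> exists a : 'I_n, val i = (val a).+1.
Proof.
move=> hi; have ha : i.-1 < n by apply: leq_ltn_trans (leq_pred _) (ltn_ord i).
by exists (Ordinal ha) => /=; lia.
Qed.

Lemma tau_mem n (z : 'S_n) (a b : 'I_n) : fpfb z -> val b = (val a).+1 ->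
  (tperm a b \in tau z) = (z b < z a).
Proof.
move=> hz hb; rewrite inE tau_char // andbC.
case: (z b < z a) => //=; apply/imsetP; exists b; first by rewrite inE /= hb.
by rewrite (srE hb).
Qed.

Lemma tau_setE n (z : 'S_n) (m : nat) : fpfb z -> 0 < m < n ->
  (tau z = [set sr n m]) <->
  (forall a b : 'I_n, val b = (val a).+1 -> (z b < z a) = (val b == m)).
Proof.
move=> hz /andP[m0 mn].
have [a0 hb0] := adj_of (i := Ordinal mn) m0.
set b0 := Ordinal mn in hb0.
have srm : sr n m = tperm a0 b0 by rewrite -srE.
split => [ht a b hb | hab].
  by rewrite -tau_mem // ht inE srm tperm_adj_eq.
apply/setP => s; rewrite inE srm.
case: (boolP (s \in simples n)) => [/imsetP [i hi ->]|hs] /=.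
  rewrite inE in hi; have [a hia] := adj_of hi.
  by rewrite (srE hia) tau_char // hab // inE tperm_adj_eq.
rewrite inE; apply/esym/negbTE; apply: contra hs => /eqP ->; apply/imsetP; exists b0 => //.
  by rewrite inE /=.
Qed.


Section Uniq.
Variables (n m : nat) (hn : n = m + m) (m0 : 0 < m) (z : 'S_n) (hz : fpfb z).
Hypothesis hd : forall a b : 'I_n, val b = (val a).+1 -> (z b < z a) = (val b == m).

Lemma adj_inc (a b : 'I_n) : val b = (val a).+1 -> val b != m -> z a < z b.
Proof.
move=> hb hm; have := hd hb; rewrite (negbTE hm) => h.
rewrite ltn_neqAle leqNgt h andbT.
apply/eqP => e; have e' := perm_inj (val_inj e); move: hb; rewrite e'; lia.
Qed.

Lemma mono d : forall i j : 'I_n, val j = val i + d.+1 -> j < m -> z i < z j.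
Proof.
elim: d => [|d IH] i j hj jm.
  by apply: adj_inc; move: hj jm => /=; lia.
have hk : val i + d.+1 < n by move: hj (ltn_ord j) => /=; lia.
apply: (@ltn_trans (z (Ordinal hk))).
  by apply: IH => //=; move: hj jm => /=; lia.
by apply: adj_inc => /=; move: hj jm => /=; lia.
Qed.

Lemma mono' (i j : 'I_n) : i < j -> j < m -> z i < z j.
Proof. move=> ij jm; apply: (@mono (j - i).-1) => //; move: ij => /=; lia. Qed.

Lemma low_ge (k : 'I_n) : k < m -> m <= z k.
Proof.
move=> km; rewrite leqNgt; apply/negP => zk.
have zz := fpf_invol hz k.
case: (ltngtP k (z k)) => h.
- by have := mono' h zk; rewrite zz; lia.
- by have := mono' h km; rewrite zz; lia.
- by move: (fpf_nofix hz k); rewrite -(val_inj h) eqxx.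
Qed.

Lemma low_ge2 d : forall k : 'I_n, val k = d -> d < m -> m + d <= z k.
Proof.
elim: d => [|d IH] k hk dm; first by rewrite addn0; apply: low_ge; rewrite -hk in dm.
have hd' : d < n by lia.
have := IH (Ordinal hd') erefl (ltnW dm).
have := @mono' (Ordinal hd') k; rewrite /= hk => /(_ (ltnSn _)) h; move: (h dm).
lia.
Qed.

Lemma low_le e : forall k : 'I_n, val k + e = m.-1 -> z k <= m + k.
Proof.
elim: e => [|e IH] k hk; move: hk => /= hk.
  by move: (ltn_ord (z k)); rewrite addn0 in hk; move: hk; rewrite /=; lia.
have hk' : (nat_of_ord k).+1 < n by lia.
have := IH (Ordinal hk') ltac:(rewrite /=; lia).
have := @mono' k (Ordinal hk') (ltnSn _) ltac:(rewrite /=; lia).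
rewrite /=; lia.
Qed.

Lemma zchar (k : 'I_n) : val (z k) = if k < m then k + m else k - m.
Proof.
rewrite /=; case: ifP => km.
  have h1 := low_ge2 erefl km.
  have h2 := @low_le (m.-1 - k) k ltac:(rewrite /=; lia).
  move: h1 h2 => /=; case: (z k) => w hw /=. lia.
have hj : nat_of_ord k - m < n by move: (ltn_ord k); lia.
have hjm : nat_of_ord k - m < m by move: (ltn_ord k); lia.
have h1 := low_ge2 (k := Ordinal hj) erefl hjm.
have h2 := @low_le (m.-1 - (nat_of_ord k - m)) (Ordinal hj) ltac:(rewrite /=; lia).
have e : z (Ordinal hj) = k by apply: val_inj; move: h1 h2 => /=; lia.
by have := fpf_invol hz (Ordinal hj); rewrite e => ->.
Qed.
End Uniq.


Lemma Wf_lt n m (hn : n = m + m) (k : 'I_n) : (if k < m then k + m else k - m) < n.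
Proof. by move: (ltn_ord k); case: ifP; lia. Qed.

Definition Wf n m (hn : n = m + m) (k : 'I_n) : 'I_n := Ordinal (Wf_lt hn k).

Lemma Wf_inj n m (hn : n = m + m) : injective (Wf hn).
Proof.
move=> i j /(congr1 val) /=; move: (ltn_ord i) (ltn_ord j).
by case: ifP; case: ifP => *; apply: val_inj => /=; lia.
Qed.

Definition W n m (hn : n = m + m) : 'S_n := perm (@Wf_inj n m hn).

Lemma WE n m (hn : n = m + m) k : val (W hn k) = if k < m then k + m else k - m.
Proof. by rewrite permE. Qed.

Lemma W_fpf n m (hn : n = m + m) : 0 < m -> fpfb (W hn).
Proof.
move=> m0; apply/andP; split.
  apply/eqP/permP => k; apply: val_inj; rewrite permM perm1 /= !WE.
  by move: (ltn_ord k); case: (ltnP k m) => h /=; case: ifP; lia.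
apply/forallP => k; apply/eqP => /(congr1 val); rewrite WE /=.
by move: (ltn_ord k); case: ifP => /=; lia.
Qed.

Lemma W_desc n m (hn : n = m + m) (a b : 'I_n) : val b = (val a).+1 ->
  (W hn b < W hn a) = (val b == m).
Proof.
rewrite /= !WE => hb; move: (ltn_ord b).
by repeat case: ifP => ? /=; move=> *; apply/idP/idP => ?; lia.
Qed.

Lemma part1 n : 2 <= n -> ~~ odd n ->
     exists! w : 'S_n, w \in Ffpf n /\ tau w = [set sr n n./2].
Proof.
move=> n2 ev.
have hn : n = n./2 + n./2 by move: (even_halfK ev); rewrite -addnn => ->.
have m0 : 0 < n./2 by lia.
have hm : 0 < n./2 < n by apply/andP; split; lia.
exists (W hn); split.
  split; first by rewrite inE W_fpf.
  by apply/(tau_setE (W_fpf hn m0) hm) => a b; apply: W_desc.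
move=> w [hw ht]; rewrite inE in hw.
have hd := proj1 (tau_setE hw hm) ht.
apply/permP => k; apply: val_inj; rewrite WE.
by rewrite (zchar hn m0 hw hd).
Qed.


Ltac dif := repeat match goal with
 | |- context [if ?c then _ else _] =>
     lazymatch c with context [if _ then _ else _] => fail | _ =>
       let E := fresh "E" in destruct c eqn:E end
 | H : context [if ?c then _ else _] |- _ =>
     lazymatch c with context [if _ then _ else _] => fail | _ =>
       let E := fresh "E" in destruct c eqn:E end
 end.

Lemma srV n i (u : 'I_n) : 0 < i < n ->
  nat_of_ord (sr n i u) = if nat_of_ord u == i.-1 then i else if nat_of_ord u == i then i.-1 else u.
Proof.
case/andP => i0 iN; have [a ha] := adj_of (i := Ordinal iN) i0.
move: ha => /= ha.
rewrite (_ : i = nat_of_ord (Ordinal iN)) // (srE (a := a)) //.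
rewrite tpermV' !eqoE /= ha /=.
by case: eqP => //; case: eqP.
Qed.

Lemma sigmaV n j (t : 'I_n) : j < n ->
  nat_of_ord (sigma n j t) = if nat_of_ord t == 0 then j else if t <= j then (nat_of_ord t).-1 else t.
Proof.
elim: j => [|j IH] jn /=.
  by rewrite perm1; case: eqP => [->|?] //; case: leqP => ? //; lia.
rewrite pcE srV; last by rewrite jn.
rewrite IH; last by lia.
move: (ltn_ord t) => ?; dif; lia.
Qed.

Lemma w0V n (t : 'I_n) : nat_of_ord (w0 n t) = n - t.+1.
Proof. by rewrite /w0 permE. Qed.

Lemma ext2_lift k (z : 'S_k) (i : 'I_k) :
  ext2 z (lift ord_max (lift ord_max i)) = lift ord_max (lift ord_max (z i)).
Proof. by rewrite /ext2 !lift_perm_lift. Qed.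

Lemma lift_maxV k (i : 'I_k) : nat_of_ord (lift ord_max (lift ord_max i) : 'I_k.+2) = i.
Proof. by rewrite !lift_max. Qed.

Lemma ext2V1 k (z : 'S_k) (t : 'I_k.+2) (h : t < k) :
  nat_of_ord (ext2 z t) = nat_of_ord (z (Ordinal h)).
Proof.
have e : t = lift ord_max (lift ord_max (Ordinal h)) by apply: ord_inj; rewrite !lift_max.
transitivity (nat_of_ord (ext2 z (lift ord_max (lift ord_max (Ordinal h))))).
  by congr (nat_of_ord (ext2 z _)).
by rewrite ext2_lift lift_maxV.
Qed.

Lemma ext2V2 k (z : 'S_k) (t : 'I_k.+2) : k <= t -> nat_of_ord (ext2 z t) = t.
Proof.
move=> h; case: (ltngtP t k.+1) => h2.
  have h1 : t < k.+1 by lia.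
  have -> : t = lift ord_max (Ordinal h1) by apply: val_inj; rewrite /= /bump; case: leqP => //; lia.
  have -> : Ordinal h1 = ord_max by apply: val_inj => /=; lia.
  by rewrite /ext2 lift_perm_lift lift_perm_id /= /bump; case: leqP => //= ?; lia.
- by move: (ltn_ord t); lia.
have -> : t = ord_max by apply: val_inj => /=; lia.
by rewrite /ext2 lift_perm_id.
Qed.



Lemma part2 k : 2 <= k -> ~~ odd k ->
     forall (w : 'S_(k.+2)) (w' : 'S_k),
       w \in Ffpf (k.+2) -> tau w = [set sr (k.+2) (k.+2)./2] ->
       w' \in Ffpf k -> tau w' = [set sr k k./2] ->
       w = nu (k.+2)./2 (rho w').
Proof.
move=> k2 ev w w' hw ht hw' ht'; rewrite inE in hw; rewrite inE in hw'.
have hk : k = k./2 + k./2 by move: (even_halfK ev); rewrite -addnn => ->.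
have hM : (k.+2)./2 = (k./2).+1 by [].
have hN : k.+2 = (k.+2)./2 + (k.+2)./2 by rewrite hM; lia.
have hm : 0 < k./2 < k by apply/andP; split; lia.
have hM' : 0 < (k.+2)./2 < k.+2 by apply/andP; split; rewrite hM; lia.
have zw : forall t : 'I_k.+2, nat_of_ord (w t) =
   if t < (k.+2)./2 then t + (k.+2)./2 else t - (k.+2)./2.
  move=> t; apply: (zchar hN _ hw (proj1 (tau_setE hw hM') ht)); lia.
have zw' : forall t : 'I_k, nat_of_ord (w' t) =
   if t < k./2 then t + k./2 else t - k./2.
  move=> t; apply: (zchar hk _ hw' (proj1 (tau_setE hw' hm) ht')); lia.
apply/permP => y.
have hsg : (k.+2)./2 < k.+2 by rewrite hM; lia.
have sgV := fun t => sigmaV t hsg.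
rewrite /nu.
move: sgV; set sg := sigma (k.+2) (k.+2)./2; clearbody sg => sgV.
rewrite -[y](permKV sg) !pcE permK.
set t := sg^-1 y.
apply: ord_inj.
rewrite zw sgV sgV w0V.
set u2 := sr _ _ _.
have v2 : nat_of_ord u2 = if k.+2 - t.+1 == k then k.+1 else if k.+2 - t.+1 == k.+1 then k else k.+2 - t.+1.
  by rewrite /u2 srV ?w0V //; lia.
have v3 : nat_of_ord (ext2 w' u2) = if u2 < k then (if u2 < k./2 then u2 + k./2 else u2 - k./2) else u2.
  case: (ltnP u2 k) => h; first by rewrite (ext2V1 w' h) zw'.
  by rewrite ext2V2.
move: v3; set u3 := ext2 w' u2 => v3.
move: (ltn_ord t) (ltn_ord u2) (ltn_ord u3) v2 v3 => ? ? ? v2 v3.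
rewrite hM; dif; lia.
Qed.


Theorem proposition6p5 :
  (forall n : nat, 2 <= n -> ~~ odd n ->
     exists! w : 'S_n, w \in Ffpf n /\ tau w = [set sr n n./2]) /\
  (forall k : nat, 2 <= k -> ~~ odd k ->
     forall (w : 'S_(k.+2)) (w' : 'S_k),
       w \in Ffpf (k.+2) -> tau w = [set sr (k.+2) (k.+2)./2] ->
       w' \in Ffpf k -> tau w' = [set sr k k./2] ->
       w = nu (k.+2)./2 (rho w')).
Proof. split; [exact: part1 | exact: part2]. Qed.
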